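(* Let $(\Omega,\mathcal F,\mathbb P)$ be a probability space, $1\le p<+\infty$, $q$ with $1/p+1/q=1$, $\mathbb X=\mathbb R^{n}$ with the Euclidean scalar product $\langle\cdot,\cdot\rangle$, $\mathbb U=\mathbb R^{m}$, $\mathbb W=\mathbb R^{k}$, $\mathbb Y=L^p(\Omega,\mathcal F,\mathbb P;\mathbb R^{n})$ and $\mathbb Y^\sharp=L^q(\Omega,\mathcal F,\mathbb P;\mathbb R^{n})$. Let $T\ge1$ be an integer, $(\mathbf W_t)_{t=1,\dots,T}$ random variables with values in $\mathbb W$, and for $t=0,\dots,T-1$ let $f_t:\mathbb X\times\mathbb U\times\mathbb W\to\mathbb X$ and $L_t:\mathbb X\times\mathbb U\times\mathbb W\to[0,+\infty]$, and $\Phi:\mathbb X\to[0,+\infty]$ be given. Assume: (a) for all $(x,u)$, $f_t(x,u,\mathbf W_{t+1})\in\mathbb Y$; (b) the $L_t$ and $\Phi$ are nonnegative measurable functions. Define the Bellman functions $V_T=\Phi$ and, for $t=T-1,\dots,0$, $V_t(x)=\inf\mathbb E\big[\sum_{s=t}^{T-1}L_s(\mathbf X_s,\mathbf U_s,\mathbf W_{s+1})\mathbin{\overset{\cdot}{+}}\Phi(\mathbf X_T)\big]$, the infimum being over processes with $\mathbf X_t=x$, $\mathbf X_{s+1}=f_s(\mathbf X_s,\mathbf U_s,\mathbf W_{s+1})$ and $\sigma(\mathbf U_s)\subset\sigma(\mathbf X_s)$ for $s=t,\dots,T-1$. Assume moreover that the $V_t$ are measurable and satisfy the Bellman equation $V_t(x)=\inf_{u\in\mathbb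 U}\mathbb E\big[L_t(x,u,\mathbf W_{t+1})\mathbin{\overset{\cdot}{+}} V_{t+1}(f_t(x,u,\mathbf W_{t+1}))\big]$ for $t=T-1,\dots,0$ and all $x$. Define the Hamiltonian $H(x,u,\mathbf X^\sharp)=\mathbb E\big[L_t(x,u,\mathbf W_{t+1})\mathbin{\overset{\cdot}{+}}\langle f_t(x,u,\mathbf W_{t+1}),\mathbf X^\sharp\rangle\big]$ for $(x,u,\mathbf X^\sharp)\in\mathbb X\times\mathbb U\times\mathbb Y^\sharp$. Then for all $t=T-1,\dots,0$ and $x\in\mathbb X$, $$V_t(x)=\inf_{\mathbf X\in\mathbb Y}\Big(\inf_{u\in\mathbb U}\ \sup_{\mathbf X^\sharp\in\mathbb Y^\sharp}\big(\mathbb E[\langle-\mathbf X,\mathbf X^\sharp\rangle]\mathbin{\underset{\cdot}{+}} H(x,u,\mathbf X^\sharp)\big)\mathbin{\overset{\cdot}{+}}\mathbb E[V_{t+1}(\mathbf X)]\Big),$$ and, writing $V_t^\star(x^\sharp)=\sup_{x\in\mathbb X}\big(\langle x,x^\sharp\rangle\mathbin{\underset{\cdot}{+}}(-V_t(x))\big)$, for all $t=T-1,\dots,0$ and $x^\sharp\in\mathbb R^{n}$, $$V_t^\star(x^\sharp)\le\inf_{\mathbf X^\sharp\in\mathbb Y^\sharp}\Big(\sup_{u\in\mathbb U}\ \sup_{x\in\mathbb X}\big(\langle x,x^\sharp\rangle\mathbin{\underset{\cdot}{+}}(-H(x,u,\mathbf X^\sharp))\big)\mathbin{\overset{\cdot}{+}}\mathbb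 E\big[V_{t+1}^\star(\mathbf X^\sharp)\big]\Big).$$
   Context: $\overline{\mathbb R}=[-\infty,+\infty]$. The Moreau lower addition $\mathbin{\underset{\cdot}{+}}$ is usual addition extended by $(+\infty)\mathbin{\underset{\cdot}{+}}(-\infty)=(-\infty)\mathbin{\underset{\cdot}{+}}(+\infty)=-\infty$; the Moreau upper addition $\mathbin{\overset{\cdot}{+}}$ is usual addition extended by $(+\infty)\mathbin{\overset{\cdot}{+}}(-\infty)=(-\infty)\mathbin{\overset{\cdot}{+}}(+\infty)=+\infty$. The Hamiltonian $H$ depends on $t$ (through $L_t,f_t$); in each displayed formula for index $t$ it is the one built from $L_t,f_t$. $\mathbb E[V_{t+1}^\star(\mathbf X^\sharp)]$ denotes the expectation of the random variable $\omega\mapsto V_{t+1}^\star(\mathbf X^\sharp(\omega))$. *)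

(* Defs.v *)
From HB Require Import structures.
From mathcomp Require Import all_boot all_order all_algebra.
From mathcomp Require Import all_classical all_reals all_analysis measurable_realfun.
Set Implicit Arguments. Unset Strict Implicit. Unset Printing Implicit Defensive.
Import Order.TTheory GRing.Theory Num.Theory.
Import numFieldNormedType.Exports.
Local Open Scope classical_set_scope.
Local Open Scope ring_scope.

Section StochasticControl.
Variables (R : realType) (d : measure_display) (Omega : measurableType d).
Variable (P : probability Omega R).

Definition dotv (n : nat) (a b : 'rV[R]_n) : R := \sum_(i < n) a ord0 i * b ord0 i.
Definition euclid_norm (n : nat) (a : 'rV[R]_n) : R := Num.sqrt (dotv a a).

Definition borel (T : topologicalType) : set (set T) := <<s (@open T) >>.

Definition rv_vec (n : nat) (Y : Omega -> 'rV[R]_n) : Prop :=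
  forall B, borel B -> measurable (Y @^-1` B).

Definition sigma_of (n : nat) (Y : Omega -> 'rV[R]_n) : set (set Omega) :=
  [set Y @^-1` B | B in borel (T := 'rV[R]_n)].

Definition Lp_vec (n : nat) (p : \bar R) (Y : Omega -> 'rV[R]_n) : Prop :=
  rv_vec Y /\ (Lnorm P p (fun w => (euclid_norm (Y w))%:E) < +oo)%E.

Definition borel_efun (T : topologicalType) (g : T -> \bar R) : Prop :=
  forall B : set (\bar R), measurable B -> borel (g @^-1` B).

Definition conj_exp (p : R) (q : \bar R) : Prop :=
  (p = 1 /\ q = +oo%E) \/
  (exists q' : R, q = q'%:E /\ 0 < q' /\ p^-1 + q'^-1 = 1).

Variables (n m k T : nat).
Variable (W : nat -> Omega -> 'rV[R]_k).
Variable (f : nat -> 'rV[R]_n -> 'rV[R]_m -> 'rV[R]_k -> 'rV[R]_n).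
Variable (L : nat -> 'rV[R]_n -> 'rV[R]_m -> 'rV[R]_k -> \bar R).
Variable (Phi : 'rV[R]_n -> \bar R).

Local Open Scope ereal_scope.

Definition admissible (t : nat) (x : 'rV[R]_n)
    (X : nat -> Omega -> 'rV[R]_n) (U : nat -> Omega -> 'rV[R]_m) : Prop :=
  X t = cst x /\
  (forall s, (t <= s <= T)%N -> rv_vec (X s)) /\
  (forall s, (t <= s < T)%N ->
     [/\ rv_vec (U s),
         (forall w, X s.+1 w = f s (X s w) (U s w) (W s.+1 w)) &
         sigma_of (U s) `<=` sigma_of (X s)]).

(* expected cost, with Moreau upper addition *)
Definition cost (t : nat) (X : nat -> Omega -> 'rV[R]_n) (U : nat -> Omega -> 'rV[R]_m)
  : \bar R :=
  \int[P]_w dual_adde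
     (\big[dual_adde/0]_(t <= s < T) L s (X s w) (U s w) (W s.+1 w))
     (Phi (X T w)).

Definition Vfun (t : nat) (x : 'rV[R]_n) : \bar R :=
  if t == T then Phi x
  else ereal_inf [set c | exists X U, admissible t x X U /\ c = cost t X U].

Definition Ham (t : nat) (x : 'rV[R]_n) (u : 'rV[R]_m) (Xs : Omega -> 'rV[R]_n)
  : \bar R :=
  \int[P]_w dual_adde (L t x u (W t.+1 w)) (dotv (f t x u (W t.+1 w)) (Xs w))%:E.

(* Fenchel conjugate of V_t, with Moreau lower addition *)
Definition Vstar (t : nat) (xs : 'rV[R]_n) : \bar R :=
  ereal_sup [set (dotv x xs)%:E + - Vfun t x | x in [set: 'rV[R]_n]].

End StochasticControl.

(* Main.v *)
Require Import Defs.
From HB Require Import structures.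
From mathcomp Require Import all_boot all_order all_algebra.
From mathcomp Require Import all_classical all_reals all_analysis measurable_realfun.
From mathcomp Require Import ess_sup_inf.
From mathcomp Require Import lra ring.
Import Order.TTheory GRing.Theory Num.Theory.
Import numFieldNormedType.Exports.
Local Open Scope classical_set_scope.
Local Open Scope ring_scope.
Local Open Scope ereal_scope.
Import DualAddTheory.

Section Aux.
Set Implicit Arguments. Unset Strict Implicit.
Context (R : realType) (d : measure_display) (Omega : measurableType d).

Lemma preim_borel (T : topologicalType) (Y : Omega -> T) :
  (forall O : set T, open O -> measurable (Y @^-1` O)) ->
  forall B, borel B -> measurable (Y @^-1` B).
Proof.
move=> hO B hB.
have sa : sigma_algebra setT (image_set_system setT Y (@measurable d Omega)).
  exact: sigma_algebra_image (@sigma_algebra_measurable d Omega).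
suff : <<s (@open T) >> `<=` image_set_system setT Y (@measurable d Omega).
  by move=> /(_ B hB); rewrite /image_set_system /= setTI.
apply: smallest_sub => // O oO; rewrite /image_set_system /= setTI; exact: hO.
Qed.

Lemma cont_borel (T1 T2 : topologicalType) (phi : T1 -> T2) :
  continuous phi -> forall B, borel B -> borel (phi @^-1` B).
Proof.
move=> cphi B hB.
have sa : sigma_algebra setT (image_set_system setT phi (@borel T1)).
  exact: (sigma_algebra_image _ (smallest_sigma_algebra setT (@open T1))).
suff : <<s (@open T2) >> `<=` image_set_system setT phi (@borel T1).
  by move=> /(_ B hB); rewrite /image_set_system /= setTI.
apply: smallest_sub => // O oO; rewrite /image_set_system /= setTI.
apply: sub_sigma_algebra; move/continuousP: cphi; exact.
Qed.

Lemma borel_measR (h : Omega -> R) :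
  (forall B : set R, borel B -> measurable (h @^-1` B)) -> measurable_fun setT h.
Proof.
move=> hB; apply: (measurability _ (RGenOpens.measurableE R)) => //.
move=> _ [_ [a [b ->]] <-]; rewrite setTI; apply: hB.
apply: sub_sigma_algebra; exact: interval_open.
Qed.

Lemma borelR_meas (B : set R) : borel B -> measurable B.
Proof.
move=> hB; suff : <<s (@open R) >> `<=` @measurable _ R by exact.
apply: smallest_sub; first exact: sigma_algebra_measurable.
move=> O; exact: open_measurable.
Qed.

Lemma rv_open n (Y : Omega -> 'rV[R]_n) : rv_vec Y -> forall O, open O -> measurable (Y @^-1` O).
Proof. move=> hY O oO; apply: hY; exact: sub_sigma_algebra. Qed.

Lemma rv_measR n (Y : Omega -> 'rV[R]_n) (phi : 'rV[R]_n -> R) :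
  rv_vec Y -> continuous phi -> measurable_fun setT (phi \o Y).
Proof.
move=> hY cphi; apply: borel_measR => B hB; rewrite comp_preimage.
apply: hY; exact: cont_borel.
Qed.

Lemma rv_coord n (Y : Omega -> 'rV[R]_n) (i : 'I_n) :
  rv_vec Y -> measurable_fun setT (fun w => Y w ord0 i).
Proof.
move=> hY; exact: (@rv_measR n Y (fun v => v ord0 i) hY (@coord_continuous _ _ _ _ _)).
Qed.

Lemma borel_efun_comp (T : topologicalType) (g : T -> \bar R) (Z : Omega -> T) :
  borel_efun g -> (forall O, open O -> measurable (Z @^-1` O)) ->
  measurable_fun setT (g \o Z).
Proof.
move=> hg hZ _ B mB; rewrite setTI comp_preimage; apply: preim_borel hZ _ _.
exact: hg.
Qed.

Lemma dotv_meas n (X Y : Omega -> 'rV[R]_n) : rv_vec X -> rv_vec Y ->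
  measurable_fun setT (fun w => dotv (X w) (Y w)).
Proof.
move=> hX hY; rewrite /dotv; apply: measurable_sum => i.
by apply: measurable_funM; apply: rv_coord.
Qed.

Lemma norm_meas n (X : Omega -> 'rV[R]_n) : rv_vec X ->
  measurable_fun setT (fun w => euclid_norm (X w)).
Proof.
move=> hX; rewrite /euclid_norm.
apply: (measurableT_comp (continuous_measurable_fun (@sqrt_continuous R))).
exact: dotv_meas.
Qed.

Lemma rv_cst n (v : 'rV[R]_n) : rv_vec (fun _ : Omega => v).
Proof.
move=> B _; have [hv|hv] := pselect (B v).
  by rewrite (_ : _ @^-1` _ = setT) //; apply/seteqP; split.
by rewrite (_ : _ @^-1` _ = set0) //; apply/seteqP; split.
Qed.

Lemma meas_L n m k (g : 'rV[R]_n -> 'rV[R]_m -> 'rV[R]_k -> \bar R)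
  (x : 'rV[R]_n) (u : 'rV[R]_m) (Wt : Omega -> 'rV[R]_k) :
  rv_vec Wt -> borel_efun (fun z : 'rV[R]_n * 'rV[R]_m * 'rV[R]_k => g z.1.1 z.1.2 z.2) ->
  measurable_fun setT (fun w => g x u (Wt w)).
Proof.
move=> hW hg.
apply: (@borel_efun_comp _ _ (fun w => (x, u, Wt w)) hg) => O oO.
have cpsi : continuous (fun z : 'rV[R]_k => (x, u, z)).
  move=> z.
  exact: (@cvg_pair _ _ _ (nbhs z) (nbhs (x,u)) (nbhs z) _ _ _ (fun _ => (x,u)) id (cvg_cst _) cvg_id).
have -> : (fun w => (x, u, Wt w)) @^-1` O = Wt @^-1` ((fun z => (x, u, z)) @^-1` O) by [].
apply: rv_open => //; move/continuousP: cpsi; exact.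
Qed.

Definition sv n (i : 'I_n) (r : R) : 'rV[R]_n := \row_j (if j == i then r else 0%R).
Arguments sv {n}.

Lemma sv_cont n (i : 'I_n) : continuous (sv i).
Proof.
have -> : sv i = (fun r : R => r *: (\row_j (if j == i then 1%R else 0%R) : 'rV[R]_n)).
  apply/funext => r; apply/rowP => j; rewrite !mxE; case: ifP => _; by rewrite ?mulr1 ?mulr0.
move=> r; apply: continuousZr_tmp; exact: cvg_id.
Qed.

Lemma rv_sv n (i : 'I_n) (s : Omega -> R) : measurable_fun setT s ->
  rv_vec (fun w => sv i (s w)).
Proof.
move=> ms B hB.
have -> : (fun w => sv i (s w)) @^-1` B = setT `&` s @^-1` (sv i @^-1` B).
  by rewrite setTI.
apply: ms => //; apply: borelR_meas; apply: cont_borel => //; exact: sv_cont.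
Qed.


Lemma dotv_sv n (a : 'rV[R]_n) (i : 'I_n) (r : R) : dotv a (sv i r) = (a ord0 i * r)%R.
Proof.
rewrite /dotv (bigD1 i) //= big1 ?addr0; first by rewrite mxE eqxx.
by move=> j /negbTE ji; rewrite mxE ji mulr0.
Qed.

Lemma dotv0 n (a : 'rV[R]_n) : dotv a 0 = 0%R.
Proof. by rewrite /dotv big1 // => j _; rewrite mxE mulr0. Qed.

Lemma dotvN n (a b : 'rV[R]_n) : dotv (- a) b = (- dotv a b)%R.
Proof. by rewrite /dotv -sumrN; apply: eq_bigr => j _; rewrite mxE mulNr. Qed.

Lemma euclid_sv n (i : 'I_n) (r : R) : euclid_norm (sv i r) = `|r|%R.
Proof. by rewrite /euclid_norm dotv_sv mxE eqxx -expr2 sqrtr_sqr. Qed.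

Lemma euclid0 n : euclid_norm (0%R : 'rV[R]_n) = 0%R.
Proof. by rewrite /euclid_norm dotv0 sqrtr0. Qed.

Lemma coord_le_norm n (a : 'rV[R]_n) (i : 'I_n) : (`|a ord0 i| <= euclid_norm a)%R.
Proof.
rewrite -sqrtr_sqr /euclid_norm; apply: ler_wsqrtr.
rewrite /dotv (bigD1 i) //= expr2 lerDl; apply: sumr_ge0 => j _.
by rewrite -expr2 sqr_ge0.
Qed.

Lemma cont_sum (T : topologicalType) (I : Type) (s : seq I) (F : I -> T -> R) :
  (forall i, continuous (F i)) -> continuous (fun z => (\sum_(i <- s) F i z)%R).
Proof.
elim: s => [|i s IH] hF.
  have -> : (fun z => (\sum_(i <- [::]) F i z)%R) = (fun=> 0%R).
    by apply/funext => z; rewrite big_nil.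
  exact: cst_continuous.
have -> : (fun z => (\sum_(j <- i :: s) F j z)%R) =
  (F i + (fun z => (\sum_(j <- s) F j z)%R))%R.
  by apply/funext => z; rewrite big_cons.
move=> z; apply: continuousD; [exact: hF | exact: IH].
Qed.

Lemma dotv_cont n (x : 'rV[R]_n) : continuous (fun ys => dotv x ys).
Proof.
rewrite /dotv; apply: cont_sum => i z.
apply: (@continuousM _ _ (fun=> x ord0 i) (fun ys : 'rV[R]_n => ys ord0 i)).
  exact: cst_continuous.
exact: coord_continuous.
Qed.

Lemma conj_open n (V : 'rV[R]_n -> \bar R) (r : R) :
  open [set ys | r%:E < ereal_sup [set (dotv x ys)%:E + - V x | x in [set: 'rV[R]_n]]].
Proof.
have -> : [set ys | r%:E < ereal_sup [set (dotv x ys)%:E + - V x | x in [set: 'rV[R]_n]]] =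
  \bigcup_(x in [set: 'rV[R]_n]) ((fun ys => dotv x ys) @^-1`
     [set a : R | r%:E < a%:E + - V x]).
  apply/seteqP; split => ys /=.
    by move=> /ereal_sup_gtP [_ [x _ <-] hx]; exists x.
  move=> [x _ hx]; apply/ereal_sup_gtP; exists ((dotv x ys)%:E + - V x); [by exists x | exact: hx].
apply: bigcup_open => x _.
move/continuousP: (@dotv_cont n x); apply.
case: (V x) => [v| |].
- have -> : [set a : R | r%:E < a%:E + - v%:E] = [set a | (r + v < a)%R].
    by apply/seteqP; split => a /=; rewrite -EFinD lte_fin ltrBrDr.
  exact: open_gt.
- have -> : [set a : R | r%:E < a%:E + - +oo] = set0.
    by apply/seteqP; split => a //=; rewrite addeNy ltNge leNye.
  exact: open0.
- have -> : [set a : R | r%:E < a%:E + - -oo] = setT.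
    by apply/seteqP; split => a //= _; rewrite addey // ltey.
  exact: openT.
Qed.

Lemma conj_meas n (V : 'rV[R]_n -> \bar R) (Y : Omega -> 'rV[R]_n) : rv_vec Y ->
  measurable_fun setT
    (fun w => ereal_sup [set (dotv x (Y w))%:E + - V x | x in [set: 'rV[R]_n]]).
Proof.
move=> hY; apply: (measurability _ (ErealGenOInfty.measurableE R)) => //.
move=> _ [_ [r ->] <-]; rewrite setTI.
set O := [set ys | r%:E < ereal_sup [set (dotv x ys)%:E + - V x | x in [set: 'rV[R]_n]]].
have -> : (fun w => ereal_sup [set (dotv x (Y w))%:E + - V x | x in [set: 'rV[R]_n]])
   @^-1` `]r%:E, +oo[%classic = Y @^-1` O.
  apply/seteqP; split => w /=; rewrite /O /= in_itv /= andbT //.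
apply: rv_open => //; exact: conj_open.
Qed.

Local Open Scope ring_scope.
Definition clamp (r : R) : R := Num.max (-1) (Num.min r 1).
Lemma clamp_props (r : R) : [/\ (`|clamp r| <= 1)%R, (0 <= r * clamp r)%R & ((r * clamp r = 0)%R -> r = 0%R)].
Proof.
rewrite /clamp /Order.max /Order.min.
case: (ltrP r 1) => h1.
- case: (ltrP (-1) r) => h2.
  + split; first by rewrite ler_norml; lra.
      by rewrite -expr2 sqr_ge0.
    by move/eqP; rewrite mulf_eq0 orbb => /eqP.
  + split; first by rewrite normrN normr1.
      by rewrite mulrN1 oppr_ge0; lra.
    by move/eqP; rewrite mulrN1 oppr_eq0 => /eqP.
- case: (ltrP (-1) 1) => h2.
  + split; first by rewrite normr1.
      by rewrite mulr1; lra.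
    by rewrite mulr1.
  + lra.
Qed.
Local Close Scope ring_scope.

End Aux.
Arguments sv {R n}.

Lemma id1 (R : realType) (A B : \bar R) : 0 <= A ->
  maxe (dual_adde A B) 0 + maxe (- B) 0 = A + maxe B 0 + maxe (- dual_adde A B) 0.
Proof.
move: A B => [a| |] [b| |] //=; rewrite /dual_adde ?lee_fin => a0.
- rewrite /Order.max /= ?lte_fin; repeat case: ifP => ?; rewrite -?EFinD; congr EFin; lra.
all: rewrite /= ?maxye ?maxNye ?addey ?addye //.
all: rewrite /= ?maxye ?maxNye ?addey ?addye //.
all: by rewrite /Order.max /=; case: ifP.
Qed.

Lemma id2 (R : realType) (A B : \bar R) : 0 <= A ->
  maxe (- B) 0 <= maxe (- dual_adde A B) 0 + A.
Proof.
move: A B => [a| |] [b| |] //=; rewrite /dual_adde ?lee_fin => a0.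
- rewrite /Order.max /= ?lte_fin; repeat case: ifP => ?; rewrite -?EFinD lee_fin; lra.
all: rewrite /= ?maxye ?maxNye ?addey ?addye ?leey //.
by rewrite add0e lee_fin.
Qed.

Lemma ereal_key (R : realType) (a P N P' N' : \bar R) : 0 <= a -> 0 <= P -> 0 <= N -> 0 <= P' -> 0 <= N' ->
  P' + N = a + P + N' -> N <= N' + a -> P' - N' <= dual_adde a (P - N).
Proof.
move: a P N P' N' => [a| |] [p| |] [n| |] [p'| |] [n'| |] //=; rewrite ?lee_fin ?leey ?leNye //=;
  rewrite -?EFinD -?EFinN -?EFinB ?lee_fin ?eqe //.
all: try by move=> *; lra.
all: try by move=> *; rewrite leNye.
move=> ? ? ? ? ? [] *; lra.
Qed.

Lemma ereal_key2 (R : realType) (l p n : \bar R) : 0 <= l -> 0 <= p -> 0 <= n ->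
  (n - p) + dual_adde l (p - n) <= l.
Proof.
move: l p n => [l| |] [p| |] [n| |] //=; rewrite /dual_adde ?lee_fin ?leey ?leNye //=;
  rewrite -?EFinD -?EFinN -?EFinB ?lee_fin //.
all: move=> *; lra.
Qed.

Lemma daddyE (R : realType) (x : \bar R) : dual_adde +oo x = +oo. Proof. by []. Qed.
Lemma daddeyE (R : realType) (x : \bar R) : dual_adde x +oo = +oo. Proof. by case: x. Qed.
Lemma dadd_fin (R : realType) (x : \bar R) (r : R) : dual_adde x r%:E = x + r%:E.
Proof. by case: x. Qed.
Lemma dadd_ge0 (R : realType) (x y : \bar R) : 0 <= x -> 0 <= y -> dual_adde x y = x + y.
Proof. by case: x => [?| |]; case: y => [?| |]. Qed.

Section AuxP.
Set Implicit Arguments. Unset Strict Implicit.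
Context (R : realType) (d : measure_display) (Omega : measurableType d)
  (P : probability Omega R).

Lemma Lp_coord_int n (p : R) (Y : Omega -> 'rV[R]_n) (i : 'I_n) :
  (1 <= p)%R -> Lp_vec P p%:E Y ->
  P.-integrable setT (EFin \o (fun w => Y w ord0 i)).
Proof.
move=> p1 [hY hfin].
have mN := @norm_meas R d Omega n Y hY.
have hL : (fun w => euclid_norm (Y w)) \in Lfun P p%:E.
  rewrite inE; apply/andP; split; rewrite inE //=.
have h1 : (fun w => euclid_norm (Y w)) \in Lfun P 1.
  have p1' : (1 <= p%:E)%E by rewrite lee_fin.
  apply: (@Lfun_subset _ _ _ P 1 p%:E (lexx _) p1' _ p1' _ hL).
  set x := (X in X \is a fin_num); have -> : x = 1 by exact: probability_setT.
  by [].
move/Lfun1_integrable : h1 => hi.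
apply: le_integrable hi => //.
  by apply: measurableT_comp => //; exact: rv_coord.
move=> w _ /=; rewrite lee_fin (le_trans (@coord_le_norm _ _ (Y w) i)) //.
exact: ler_norm.
Qed.


Lemma Lq_sv n (q : \bar R) (i : 'I_n) (h : Omega -> R) (M : R) :
  (q = +oo \/ exists q', q = q'%:E /\ (0 < q')%R) ->
  measurable_fun setT h -> (forall w, `|h w| <= M)%R ->
  Lp_vec P q (fun w => sv i (h w)).
Proof.
move=> hq mh hM; split; first exact: rv_sv.
rewrite (@eq_Lnorm _ _ _ P q _ (fun w => (`|h w|)%:E)); last first.
  by move=> w; rewrite /= euclid_sv.
have M0 : (0 <= M)%R by apply: le_trans (hM point).
case: hq => [->|[q' [-> q'0]]].
  rewrite unlock /Lnorm.
  case: ifPn => _; last exact: ltry.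
  apply: (@le_lt_trans _ _ M%:E); last exact: ltry.
  apply/ess_supP; apply: aeW => w /=; rewrite lee_fin normr_id; exact: hM.
rewrite unlock /Lnorm.
apply: poweR_lty.
apply: (@le_lt_trans _ _ (\int[P]_w (cst ((M `^ q')%:E)) w)).
  apply: ge0_le_integral => //.
  - move=> w _; exact: poweR_ge0.
  - apply: (@eq_measurable_fun _ _ _ _ _ (fun w => ((`|h w| `^ q')%:E))).
      by move=> w _ /=; rewrite normr_id.
    apply: measurableT_comp => //.
    exact: (measurableT_comp (measurable_powR q') (measurableT_comp (@normr_measurable R setT) mh)).
  - move=> w _ /=; rewrite normr_id lee_fin.
    apply: ge0_ler_powR; [exact: ltW | exact: normr_ge0 | exact: M0 | exact: hM].
rewrite integral_cst //.
set x := (X in _ * X); have -> : x = 1 by exact: probability_setT.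
by rewrite mule1 ltry.
Qed.

Lemma Lq_0 n (q : \bar R) : q != 0 -> Lp_vec P q (fun _ => (0%R : 'rV[R]_n)).
Proof.
move=> q0; split; first exact: rv_cst.
rewrite (@eq_Lnorm _ _ _ P q _ (cst 0)); last by move=> w; rewrite /= euclid0.
by rewrite Lnorm0 // ltry.
Qed.


Ltac solve_side := first [ done | exact: measurable_funepos | exact: measurable_funeneg
  | (by move=> ? _; apply: adde_ge0)
  | (by apply: emeasurable_funD => //; first [exact: measurable_funepos | exact: measurable_funeneg]) ].

Lemma dadd_meas (f g : Omega -> \bar R) : measurable_fun setT f -> measurable_fun setT g ->
  measurable_fun setT (fun w => dual_adde (f w) (g w)).
Proof.
move=> mf mg.
have -> : (fun w => dual_adde (f w) (g w)) = (fun w => - ((- f w) + (- g w))).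
  apply/funext => w; rewrite /dual_adde.
  by case: (f w) => [?| |]; case: (g w) => [?| |] //=; rewrite opprD !opprK.
apply: measurableT_comp => //.
by apply: emeasurable_funD; apply: measurableT_comp.
Qed.

Lemma int_dadd_le (A B : Omega -> \bar R) :
  measurable_fun setT A -> measurable_fun setT B -> (forall w, 0 <= A w) ->
  \int[P]_w dual_adde (A w) (B w) <= dual_adde (\int[P]_w A w) (\int[P]_w B w).
Proof.
move=> mA mB A0.
set h := fun w => dual_adde (A w) (B w).
have mh : measurable_fun setT h by exact: dadd_meas.
have I1 : \int[P]_w h^\+ w + \int[P]_w B^\- w =
    \int[P]_w A w + \int[P]_w B^\+ w + \int[P]_w h^\- w.
  have E : \int[P]_w (h^\+ w + B^\- w) = \int[P]_w ((A w + B^\+ w) + h^\- w).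
    apply: eq_integral => w _; rewrite !funeposE !funenegE; exact: id1.
  rewrite ge0_integralD in E; try solve_side.
  rewrite ge0_integralD in E; try solve_side.
  rewrite ge0_integralD in E; try solve_side.
have I2 : \int[P]_w B^\- w <= \int[P]_w h^\- w + \int[P]_w A w.
  rewrite -ge0_integralD //; last exact: measurable_funeneg.
  apply: ge0_le_integral => //.
  - exact: measurable_funeneg.
  - by apply: emeasurable_funD => //; exact: measurable_funeneg.
  - move=> w _; rewrite !funenegE; exact: id2.
rewrite (integralE _ _ h) (integralE _ _ B).
apply: ereal_key => //; exact: integral_ge0.
Qed.


Lemma int_shift (L : Omega -> \bar R) (g : Omega -> R) :
  measurable_fun setT L -> measurable_fun setT g -> (forall w, 0 <= L w) ->
  \int[P]_w (- g w)%:E + \int[P]_w dual_adde (L w) (g w)%:E <= \int[P]_w L w.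
Proof.
move=> mL mg L0.
have mg' : measurable_fun setT (EFin \o g) by exact: measurableT_comp.
apply: (@le_trans _ _ (\int[P]_w (- g w)%:E + dual_adde (\int[P]_w L w) (\int[P]_w (g w)%:E))).
  by apply: leeD2l; apply: int_dadd_le.
have -> : \int[P]_w (- g w)%:E = \int[P]_w (\- (EFin \o g)) w by [].
rewrite (integralE _ _ (\- (EFin \o g))) funeposN funenegN.
rewrite (integralE _ _ (EFin \o g)).
apply: ereal_key2; by [exact: integral_ge0 | move=> *; exact: integral_ge0 ].
Qed.

End AuxP.

Section P1.
Set Implicit Arguments. Unset Strict Implicit.
Context (R : realType) (d : measure_display) (Omega : measurableType d)
  (P : probability Omega R).

Lemma ge0_integrable (f : Omega -> \bar R) : measurable_fun setT f -> (forall w, 0 <= f w) ->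
  \int[P]_w f w != +oo -> P.-integrable setT f.
Proof.
move=> mf f0 fi; apply/integrableP; split => //.
under eq_integral do rewrite gee0_abs //.
by rewrite ltey.
Qed.

Lemma part1_lower n (p : R) (q : \bar R) (L' : Omega -> \bar R) (F X : Omega -> 'rV[R]_n)
  (V : 'rV[R]_n -> \bar R) :
  (1 <= p)%R -> (q = +oo \/ exists q', q = q'%:E /\ (0 < q')%R) ->
  measurable_fun setT L' -> (forall w, 0 <= L' w) ->
  Lp_vec P p%:E F -> Lp_vec P p%:E X ->
  (forall x, 0 <= V x) -> measurable_fun setT (V \o F) -> measurable_fun setT (V \o X) ->
  \int[P]_w dual_adde (L' w) (V (F w)) <=
  dual_adde (ereal_sup [set \int[P]_w (dotv (- X w) (Xs w))%:E +
                            \int[P]_w dual_adde (L' w) (dotv (F w) (Xs w))%:E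
                        | Xs in [set Y | Lp_vec P q Y]])
            (\int[P]_w V (X w)).
Proof.
move=> p1 hq mL L0 hF hX V0 mVF mVX.
set S := ereal_sup _.
have hq0 : q != 0 by case: hq => [->|[q' [-> q'0]]] //; rewrite eqe gt_eqF.
have Sl : \int[P]_w L' w <= S.
  apply: ereal_sup_ubound; exists (fun _ => 0%R); first exact: Lq_0.
  rewrite (eq_integral (fun _ => 0)); last by move=> w _; rewrite dotv0.
  rewrite integral0 add0e; apply: eq_integral => w _.
  by rewrite dotv0 dadd_fin adde0.
have -> : \int[P]_w dual_adde (L' w) (V (F w)) = \int[P]_w L' w + \int[P]_w V (F w).
  rewrite -ge0_integralD //; apply: eq_integral => w _; exact: dadd_ge0.
have l0 : 0 <= \int[P]_w L' w by exact: integral_ge0.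
have vF0 : 0 <= \int[P]_w V (F w) by exact: integral_ge0.
have vX0 : 0 <= \int[P]_w V (X w) by exact: integral_ge0.
have [hall|hnot] := pselect (forall i, \forall w \ae P, X w ord0 i = F w ord0 i).
  have E : \int[P]_w V (X w) = \int[P]_w V (F w).
    apply: ae_eq_integral => //.
    have := filter_forall (ae_filter_ringOfSetsType P) hall.
    apply: filterS => w hw _.
    by congr V; apply/rowP => j; rewrite hw.
  rewrite E -dadd_ge0 //; exact: lee_dD Sl (lexx _).
suff Sinf : S = +oo by rewrite Sinf daddyE leey.
case: (eqVneq (\int[P]_w L' w) +oo) => [linf|lfin].
  by apply/eqP; rewrite eq_le leey /= -linf.
move/existsNP: hnot => [i hi].
have iL : P.-integrable setT L' by exact: ge0_integrable.
have iXi : P.-integrable setT (EFin \o (fun w => X w ord0 i)) by apply: (Lp_coord_int i p1 hX).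
have iFi : P.-integrable setT (EFin \o (fun w => F w ord0 i)) by apply: (Lp_coord_int i p1 hF).
have mXi : measurable_fun setT (fun w => X w ord0 i) by apply: rv_coord; case: hX.
have mFi : measurable_fun setT (fun w => F w ord0 i) by apply: rv_coord; case: hF.
set D := fun w => (F w ord0 i - X w ord0 i)%R.
have mD : measurable_fun setT D by exact: measurable_funB.
set s := fun w => clamp (D w).
have ms : measurable_fun setT s.
  by rewrite /s /clamp; apply: measurable_maxr => //; apply: measurable_minr.
have s1 : forall w, (`|s w| <= 1)%R by move=> w; case: (clamp_props (D w)).
set a := fun w => (X w ord0 i * s w)%R.
set b := fun w => (F w ord0 i * s w)%R.
have ia : P.-integrable setT (EFin \o a).
  apply: le_integrable iXi => //.
    by apply: measurableT_comp => //; exact: measurable_funM.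
  by move=> w _ /=; rewrite lee_fin /a normrM ler_piMr.
have ib : P.-integrable setT (EFin \o b).
  apply: le_integrable iFi => //.
    by apply: measurableT_comp => //; exact: measurable_funM.
  by move=> w _ /=; rewrite lee_fin /b normrM ler_piMr.
set th := \int[P]_w (D w * s w)%:E.
have hth : th = \int[P]_w (b w)%:E - \int[P]_w (a w)%:E.
  rewrite -integralB_EFin //; apply: eq_integral => w _.
  by rewrite /D /a /b mulrBl EFinB.
have fA : \int[P]_w (a w)%:E \is a fin_num by exact: integrable_fin_num.
have fB : \int[P]_w (b w)%:E \is a fin_num by exact: integrable_fin_num.
have fth : th \is a fin_num by rewrite hth fin_numB fA fB.
have fl : \int[P]_w L' w \is a fin_num by rewrite ge0_fin_numE // ltey.
have th0 : 0 < th.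
  rewrite lt_def integral_ge0 ?andbT; last first.
    by move=> w _; rewrite lee_fin; case: (clamp_props (D w)).
  apply/negP => /eqP th0'; apply: hi.
  have : ae_eq P setT (EFin \o (fun w => D w * s w)%R) (cst 0).
    apply/ae_eq_integral_abs => //.
      by apply: measurableT_comp => //; exact: measurable_funM.
    rewrite -th0' /th; apply: eq_integral => w _; rewrite gee0_abs // lee_fin.
    by case: (clamp_props (D w)).
  apply: filterS => w /(_ I) /= [] h.
  case: (clamp_props (D w)) => _ _ /(_ h) /eqP.
  by rewrite /D subr_eq0 => /eqP ->.
have val : forall c : R,
    \int[P]_w (dotv (- X w) (sv i (c * s w)%R))%:E +
    \int[P]_w dual_adde (L' w) (dotv (F w) (sv i (c * s w)%R))%:E =
    \int[P]_w L' w + c%:E * th.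
  move=> c.
  have -> : \int[P]_w (dotv (- X w) (sv i (c * s w)%R))%:E =
      (- c)%:E * \int[P]_w (a w)%:E.
    rewrite -integralZl //; apply: eq_integral => w _.
    by rewrite dotv_sv mxE -EFinM /a; congr EFin; ring.
  have -> : \int[P]_w dual_adde (L' w) (dotv (F w) (sv i (c * s w)%R))%:E =
      \int[P]_w L' w + c%:E * \int[P]_w (b w)%:E.
    rewrite -integralZl // -integralD //; last exact: integrableZl.
    by apply: eq_integral => w _; rewrite dotv_sv dadd_fin -EFinM /b; congr (_ + EFin _); ring.
  rewrite hth -(fineK fA) -(fineK fB) -(fineK fl) -EFinB -!EFinM -!EFinD.
  by congr EFin; ring.
apply/eqP; rewrite eq_le leey /= leNgt; apply/negP => Sfin.
have fS : S \is a fin_num by rewrite ge0_fin_numE // (le_trans l0 Sl).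
have ft0 : (0 < fine th)%R by rewrite fine_gt0 // th0 ltey_eq fth.
set c := ((fine S - fine (\int[P]_w L' w) + 1) / fine th)%R.
have : \int[P]_w L' w + c%:E * th <= S.
  rewrite -val; apply: ereal_sup_ubound; exists (fun w => sv i (c * s w)%R) => //.
  apply: (@Lq_sv _ _ _ _ _ _ _ _ `|c|%R) => //.
    by apply: measurable_funM.
  by move=> w; rewrite normrM ler_piMr.
rewrite -(fineK fS) -(fineK fl) -(fineK fth) -EFinM -EFinD lee_fin /c divfK ?gt_eqF //.
lra.
Qed.


Lemma le_integral_meas (f1 f2 : Omega -> \bar R) :
  measurable_fun setT f1 -> measurable_fun setT f2 -> (forall w, f1 w <= f2 w) ->
  \int[P]_w f1 w <= \int[P]_w f2 w.
Proof.
move=> m1 m2 h; rewrite (integralE _ _ f1) (integralE _ _ f2).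
apply: leeB.
  apply: ge0_le_integral => //; [exact: measurable_funepos | exact: measurable_funepos |].
  by move=> w _; apply: (@funepos_le _ _ setT) => [? _|]; [exact: h | exact: in_setT].
apply: ge0_le_integral => //; [exact: measurable_funeneg | exact: measurable_funeneg |].
by move=> w _; apply: (@funeneg_le _ _ setT) => [? _|]; [exact: h | exact: in_setT].
Qed.

Lemma part1_upper n (q : \bar R) (L' : Omega -> \bar R) (F : Omega -> 'rV[R]_n)
  (V : 'rV[R]_n -> \bar R) :
  measurable_fun setT L' -> (forall w, 0 <= L' w) -> rv_vec F ->
  (forall x, 0 <= V x) -> measurable_fun setT (V \o F) ->
  dual_adde (ereal_sup [set \int[P]_w (dotv (- F w) (Xs w))%:E +
                            \int[P]_w dual_adde (L' w) (dotv (F w) (Xs w))%:E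
                        | Xs in [set Y | Lp_vec P q Y]])
            (\int[P]_w V (F w)) <=
  \int[P]_w dual_adde (L' w) (V (F w)).
Proof.
move=> mL L0 hF V0 mVF.
have -> : \int[P]_w dual_adde (L' w) (V (F w)) = dual_adde (\int[P]_w L' w) (\int[P]_w V (F w)).
  rewrite dadd_ge0; [|exact: integral_ge0|exact: integral_ge0].
  rewrite -ge0_integralD //; apply: eq_integral => w _; exact: dadd_ge0.
apply: lee_dD (lexx _).
apply: ge_ereal_sup => _ [Xs [hXs _] <-].
have -> : \int[P]_w (dotv (- F w) (Xs w))%:E = \int[P]_w (- dotv (F w) (Xs w))%:E.
  by apply: eq_integral => w _; rewrite dotvN.
apply: int_shift => //; exact: dotv_meas.
Qed.

Lemma ptw2 (l g v vs : \bar R) : 0 <= l -> 0 <= v -> g + - v <= vs ->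
  dual_adde l g <= dual_adde (dual_adde l v) vs.
Proof.
move=> l0 v0 h; apply: (le_trans _ (lee_dD (lexx _) h)).
move: l g v l0 v0 {h} => [l| |] [g| |] [v| |] //=; rewrite /dual_adde ?lee_fin ?leey ?leNye //=.
all: move=> *; rewrite -?EFinD ?lee_fin //; lra.
Qed.

Lemma part2_core n (L' : Omega -> \bar R) (F Xs : Omega -> 'rV[R]_n)
  (V : 'rV[R]_n -> \bar R) :
  measurable_fun setT L' -> (forall w, 0 <= L' w) -> rv_vec F -> rv_vec Xs ->
  (forall x, 0 <= V x) -> measurable_fun setT (V \o F) ->
  \int[P]_w dual_adde (L' w) (dotv (F w) (Xs w))%:E <=
  dual_adde (\int[P]_w dual_adde (L' w) (V (F w)))
    (\int[P]_w ereal_sup [set (dotv y (Xs w))%:E + - V y | y in [set: 'rV[R]_n]]).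
Proof.
move=> mL L0 hF hXs V0 mVF.
have mA : measurable_fun setT (fun w => dual_adde (L' w) (V (F w))) by exact: dadd_meas.
have mB := conj_meas V hXs.
apply: le_trans; last first.
  apply: int_dadd_le => // w; rewrite dadd_ge0 //; exact: adde_ge0.
apply: le_integral_meas.
- apply: dadd_meas => //; apply: measurableT_comp => //; exact: dotv_meas.
- exact: dadd_meas.
move=> w; apply: ptw2 => //.
by apply: ereal_sup_ubound; exists (F w).
Qed.

End P1.

Lemma conj_step (R : realType) (U : Type) (E H : U -> \bar R) (beta : \bar R) (c : R) :
  (forall u, 0 <= E u) -> (forall u, H u <= dual_adde (E u) beta) ->
  c%:E - ereal_inf [set E u | u in [set: U]] <=
  dual_adde (ereal_sup [set c%:E - H u | u in [set: U]]) beta.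
Proof.
move=> E0 hH.
set I := ereal_inf _; set S := ereal_sup _.
have I0 : 0 <= I by apply: le_ereal_inf_tmp => _ [u _ <-]; exact: E0.
have infty : (forall u, E u = +oo) -> c%:E - I <= dual_adde S beta.
  move=> h; have -> : I = +oo.
    by apply/eqP; rewrite eq_le leey /=; apply: le_ereal_inf_tmp => _ [u _ <-]; rewrite h.
  by rewrite addeNy leNye.
have Sub : forall u, c%:E - H u <= S by move=> u; apply: ereal_sup_ubound; exists u.
case: (eqVneq (dual_adde S beta) +oo) => [->|hne]; first exact: leey.
have Sfin : S != +oo by apply: contra hne => /eqP ->.
have bfin : beta != +oo by apply: contra hne => /eqP ->; rewrite daddeyE.
have Ilb : forall r, (forall u, r <= E u) -> r <= I.
  by move=> r hr; apply: le_ereal_inf_tmp => _ [u _ <-]; exact: hr.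
clearbody I S.
move: beta hH hne bfin infty => [b| |] hH hne bfin infty //.
- move: Sub Sfin hne infty; case: S => [s| |] Sub' Sfin hne infty //.
  + have lb : forall u, (c - s - b)%:E <= E u.
      move=> u; move: (Sub' u) (hH u) (E0 u).
      by case: (E u) => [e| |]; case: (H u) => [h| |] //=; rewrite /dual_adde ?lee_fin //=;
        rewrite -?EFinD -?EFinN ?lee_fin ?leey ?leNye //; move=> *; lra.
    have := Ilb _ lb.
    move: I0 Ilb infty; case: I => [i| |] //= _ _ _; rewrite /dual_adde ?lee_fin.
      by move=> *; lra.
    by move=> _; rewrite addeNy leNye.
  + apply: infty => u; move: (Sub' u) (hH u).
    by case: (H u) => [h| |] //=; case: (E u) => [e| |] //=; rewrite /dual_adde //= ?leeNy_eq.
- apply: infty => u; move: (Sub u) (hH u).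
  case: (E u) => [e| |] //=; rewrite /dual_adde; case: (H u) => [h| |] //= hS _.
  all: by move: hS Sfin; rewrite ?addey // leye_eq => /eqP ->.
Qed.

Lemma inf_dadd (R : realType) (U : Type) (S : U -> \bar R) (a b : \bar R) :
  0 <= b -> (forall u, a <= dual_adde (S u) b) ->
  a <= dual_adde (ereal_inf [set S u | u in [set: U]]) b.
Proof.
move: b => [r| |] //= r0 h; last by rewrite daddeyE leey.
rewrite dadd_fin -leeBlDr //.
apply: le_ereal_inf_tmp => _ [u _ <-]; rewrite leeBlDr //.
by rewrite -dadd_fin.
Qed.

Theorem proposition5 (R : realType) (d : measure_display) (Omega : measurableType d)
  (P : probability Omega R) (n m k T : nat) (p : R) (q : \bar R)
  (W : nat -> Omega -> 'rV[R]_k)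
  (f : nat -> 'rV[R]_n -> 'rV[R]_m -> 'rV[R]_k -> 'rV[R]_n)
  (L : nat -> 'rV[R]_n -> 'rV[R]_m -> 'rV[R]_k -> \bar R)
  (Phi : 'rV[R]_n -> \bar R) :
  (1 <= p)%R -> conj_exp p q -> (1 <= T)%N ->
  (forall t, (1 <= t <= T)%N -> rv_vec (W t)) ->
  (forall t, (t < T)%N -> forall x u, Lp_vec P p%:E (fun w => f t x u (W t.+1 w))) ->
  (forall t, (t < T)%N ->
     (forall x u w, 0 <= L t x u w) /\
     borel_efun (fun z : 'rV[R]_n * 'rV[R]_m * 'rV[R]_k => L t z.1.1 z.1.2 z.2)) ->
  (forall x, 0 <= Phi x) -> borel_efun Phi ->
  (forall t, (t <= T)%N -> borel_efun (Vfun P T W f L Phi t)) ->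
  (forall t, (t < T)%N -> forall x,
     Vfun P T W f L Phi t x =
     ereal_inf [set \int[P]_w dual_adde (L t x u (W t.+1 w))
                      (Vfun P T W f L Phi t.+1 (f t x u (W t.+1 w)))
               | u in [set: 'rV[R]_m]]) ->
  (forall t, (t < T)%N -> forall x,
     Vfun P T W f L Phi t x =
     ereal_inf [set dual_adde
        (ereal_inf [set ereal_sup [set (\int[P]_w (dotv (- X w) (Xs w))%:E)
                                       + Ham P W f L t x u Xs
                                  | Xs in [set Y | Lp_vec P q Y]]
                   | u in [set: 'rV[R]_m]])
        (\int[P]_w Vfun P T W f L Phi t.+1 (X w))
      | X in [set Y | Lp_vec P p%:E Y]]) /\
  (forall t, (t < T)%N -> forall xs : 'rV[R]_n,
     Vstar P T W f L Phi t xs <=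
     ereal_inf [set dual_adde
        (ereal_sup [set ereal_sup [set (dotv x xs)%:E + - Ham P W f L t x u Xs
                                  | x in [set: 'rV[R]_n]]
                   | u in [set: 'rV[R]_m]])
        (\int[P]_w Vstar P T W f L Phi t.+1 (Xs w))
      | Xs in [set Y | Lp_vec P q Y]]).
Proof.
move=> p1 hconj T1 hW hf hL Phi0 mPhi mV bell.
have hq : q = +oo \/ exists q', q = q'%:E /\ (0 < q')%R.
  case: hconj => [[_ ->]|[q' [-> [q'0 _]]]]; [by left | by right; exists q'].
have V0 : forall t x, 0 <= Vfun P T W f L Phi t x.
  move=> t x; rewrite /Vfun; case: ifP => _; first exact: Phi0.
  apply: le_ereal_inf_tmp => _ [X [U [_ ->]]]; apply: integral_ge0 => w _.
  have hb : 0 <= \big[dual_adde/0]_(t <= s < T) L s (X s w) (U s w) (W s.+1 w).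
    rewrite big_nat_cond; apply: (big_ind (fun v : \bar R => 0 <= v)) => //.
      by move=> a b a0 b0; rewrite dadd_ge0 //; exact: adde_ge0.
    by move=> s /andP[/andP[_ sT] _]; exact: (hL s sT).1.
  by rewrite dadd_ge0 // adde_ge0.
have mW : forall t, (t < T)%N -> rv_vec (W t.+1).
  by move=> t tT; apply: hW; rewrite ltn0Sn /=.
have mL' : forall t, (t < T)%N -> forall x u,
    measurable_fun setT (fun w => L t x u (W t.+1 w)).
  move=> t tT x u; apply: meas_L; [exact: mW | exact: (hL t tT).2].
have mVY : forall t, (t < T)%N -> forall Y : Omega -> 'rV[R]_n, rv_vec Y ->
    measurable_fun setT (Vfun P T W f L Phi t.+1 \o Y).
  move=> t tT Y hY; apply: borel_efun_comp; first exact: mV.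
  exact: rv_open.
have hq0 : q != 0 by case: hq => [->|[q' [-> q'0]]] //; rewrite eqe gt_eqF.
split.
- move=> t tT x; rewrite (bell t tT x).
  apply/eqP; rewrite eq_le; apply/andP; split.
  + apply: le_ereal_inf_tmp => _ [X hX <-].
    apply: inf_dadd; first exact: integral_ge0.
    move=> u; apply: le_trans (ereal_inf_lbound _) _; first by exists u.
    exact: (@part1_lower _ _ _ P n p q (fun w => L t x u (W t.+1 w))
      (fun w => f t x u (W t.+1 w)) X (Vfun P T W f L Phi t.+1) p1 hq (mL' t tT x u)
      (fun w => (hL t tT).1 _ _ _) (hf t tT x u) hX (V0 t.+1)
      (mVY t tT _ (hf t tT x u).1) (mVY t tT _ hX.1)).
  + apply: le_ereal_inf_tmp => _ [u _ <-].
    apply: le_trans (ereal_inf_lbound _) _.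
      by exists (fun w => f t x u (W t.+1 w)) => //; exact: hf.
    apply: le_trans; last first.
      exact: (@part1_upper _ _ _ P n q (fun w => L t x u (W t.+1 w))
        (fun w => f t x u (W t.+1 w)) (Vfun P T W f L Phi t.+1) (mL' t tT x u)
        (fun w => (hL t tT).1 _ _ _) (hf t tT x u).1 (V0 t.+1)
        (mVY t tT _ (hf t tT x u).1)).
    apply: lee_dD (lexx _).
    by apply: ereal_inf_lbound; exists u.
- move=> t tT xs.
  apply: le_ereal_inf_tmp => _ [Xs hXs <-].
  rewrite /Vstar; apply: ge_ereal_sup => _ [x _ <-].
  rewrite (bell t tT x).
  apply: le_trans.
    apply: (@conj_step R 'rV[R]_m
      (fun u => \int[P]_w dual_adde (L t x u (W t.+1 w))
                      (Vfun P T W f L Phi t.+1 (f t x u (W t.+1 w))))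
      (fun u => Ham P W f L t x u Xs)).
      move=> u; apply: integral_ge0 => w _; have l0 := (hL t tT).1 x u (W t.+1 w).
      have v0 := V0 t.+1 (f t x u (W t.+1 w)); by rewrite dadd_ge0 // adde_ge0.
    move=> u.
    exact: (@part2_core _ _ _ P n (fun w => L t x u (W t.+1 w))
        (fun w => f t x u (W t.+1 w)) Xs (Vfun P T W f L Phi t.+1) (mL' t tT x u)
        (fun w => (hL t tT).1 _ _ _) (hf t tT x u).1 hXs.1 (V0 t.+1)
        (mVY t tT _ (hf t tT x u).1)).
  apply: lee_dD (lexx _).
  apply: ge_ereal_sup => _ [u _ <-].
  apply: le_trans (ereal_sup_ubound _); last by exists u.
  by apply: ereal_sup_ubound; exists x.
Qed.
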